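(* Let $P, Q \subseteq \mathbb{R}^7$ be distinct associative $3$-planes. Then $\Theta(P) \cap \Theta(Q) \subseteq \Lambda^2_7$.
   Context: Equip $\mathbb{R}^7$ with its standard inner product, orientation and basis. Let $\varphi = e_{123} - e_{167} - e_{527} - e_{563} - e_{415} - e_{426} - e_{437}$ ($e_{ijk} = e_i\wedge e_j\wedge e_k$), $\psi = \star\varphi = e_{4567} - e_{4523} - e_{4163} - e_{4127} - e_{2637} - e_{1537} - e_{1526}$, and define $\times$ by $\langle u \times v, w \rangle = \varphi(u,v,w)$. A $3$-dimensional subspace is associative if closed under $\times$. For $u,v$: $u\wedge v$ is the 2-form $(a,b)\mapsto \langle u,a\rangle\langle v,b\rangle - \langle u,b\rangle\langle v,a\rangle$; $u\lrcorner\varphi$ is the 2-form $(a,b)\mapsto \varphi(u,a,b)$; $\Psi_{uv}$ is the 2-form $(a,b)\mapsto\psi(u,v,a,b)$. $\Lambda^2_7 = \{u \lrcorner \varphi : u \in \mathbb{R}^7\}$. For associative $P$, $\Theta(P) = \Lambda^2(P) \oplus \Psi(P)$ where $\Lambda^2(P) = \mathrm{Span}\{u\wedge v: u,v\in P\}$ and $\Psi(P) = \mathrm{Span}\{\Psi_{uv} : u,v\in P\}$. *)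

(* Defs.v *)
(* R^7 = row vectors 'rV[R]_7 over a real field R;
   2-forms on R^7 are represented by their Gram matrices
   omega i j = omega(e_i, e_j) in 'M[R]_7. Paper indices 1..7 correspond
   to ordinals 0..6. *)
From HB Require Import structures.
From mathcomp Require Import all_boot all_order all_algebra.
Set Implicit Arguments. Unset Strict Implicit. Unset Printing Implicit Defensive.
Import Order.TTheory GRing.Theory Num.Theory.
Local Open Scope ring_scope.

Section G2.
Variable R : realFieldType.
Notation vec := 'rV[R]_7.
Notation form2 := 'M[R]_7.

Definition dot (u v : vec) : R := \sum_(i < 7) u 0 i * v 0 i.

Definition ebas (k : 'I_7) : vec := delta_mx 0 k.

(* coordinate e^k(x) with paper index k in 1..7 *)
Definition coord7 (k : nat) (x : vec) : R := x 0 (inord k.-1).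

Definition e3 (i j k : nat) (u v w : vec) : R :=
  let c := [:: i; j; k] in let x := [:: u; v; w] in
  \det (\matrix_(a < 3, b < 3) coord7 (nth 0%N c a) (nth 0 x b)).

Definition e4 (i j k l : nat) (u v w z : vec) : R :=
  let c := [:: i; j; k; l] in let x := [:: u; v; w; z] in
  \det (\matrix_(a < 4, b < 4) coord7 (nth 0%N c a) (nth 0 x b)).

Definition phi (u v w : vec) : R :=
  e3 1 2 3 u v w - e3 1 6 7 u v w - e3 5 2 7 u v w - e3 5 6 3 u v w
  - e3 4 1 5 u v w - e3 4 2 6 u v w - e3 4 3 7 u v w.

Definition psi (u v w z : vec) : R :=
  e4 4 5 6 7 u v w z - e4 4 5 2 3 u v w z - e4 4 1 6 3 u v w z
  - e4 4 1 2 7 u v w z - e4 2 6 3 7 u v w z - e4 1 5 3 7 u v w z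
  - e4 1 5 2 6 u v w z.

(* cross product: <u x v, w> = phi(u,v,w); coordinates in the orthonormal basis *)
Definition cross (u v : vec) : vec := \row_(k < 7) phi u v (ebas k).

Definition assoc_plane (P : {vspace vec}) : Prop :=
  \dim P = 3%N /\ (forall u v, u \in P -> v \in P -> cross u v \in P).

Definition wedge (u v : vec) : form2 :=
  \matrix_(a < 7, b < 7)
    (dot u (ebas a) * dot v (ebas b) - dot u (ebas b) * dot v (ebas a)).

Definition contract (u : vec) : form2 :=
  \matrix_(a < 7, b < 7) phi u (ebas a) (ebas b).

Definition Psi (u v : vec) : form2 :=
  \matrix_(a < 7, b < 7) psi u v (ebas a) (ebas b).

Definition Lambda27 (w : form2) : Prop := exists u : vec, w = contract u.

Definition in_span (S : form2 -> Prop) (w : form2) : Prop :=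
  forall W : {vspace form2}, (forall x, S x -> x \in W) -> w \in W.

Definition Lambda2P (P : {vspace vec}) (w : form2) : Prop :=
  in_span (fun x => exists u v, [/\ u \in P, v \in P & x = wedge u v]) w.

Definition PsiP (P : {vspace vec}) (w : form2) : Prop :=
  in_span (fun x => exists u v, [/\ u \in P, v \in P & x = Psi u v]) w.

Definition Theta (P : {vspace vec}) (w : form2) : Prop :=
  exists w1 w2, [/\ Lambda2P P w1, PsiP P w2 & w = w1 + w2].

End G2.

(* Main.v *)
Require Import Defs.
From HB Require Import structures.
From mathcomp Require Import all_boot all_order all_algebra ring lra.
Set Implicit Arguments. Unset Strict Implicit. Unset Printing Implicit Defensive.
Import Order.TTheory GRing.Theory Num.Theory.
Local Open Scope ring_scope.
Section S.
Variable R : realFieldType.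
Implicit Types u v w z x y : 'rV[R]_7.
Lemma e3E i j k u v w : e3 i j k u v w = 
  coord7 i u * coord7 j v * coord7 k w - coord7 i u * coord7 k v * coord7 j w
 - coord7 j u * coord7 i v * coord7 k w + coord7 j u * coord7 k v * coord7 i w
 + coord7 k u * coord7 i v * coord7 j w - coord7 k u * coord7 j v * coord7 i w.
Proof.
rewrite /e3; do 3 rewrite !(expand_det_row _ ord0) !big_ord_recl !big_ord0 /cofactor.
rewrite !det_mx00 !mxE /=; ring.
Qed.
Lemma c7ord u (i : 'I_7) : u 0 i = coord7 i.+1 u.
Proof. by rewrite /coord7 /= inord_val. Qed.
Lemma dotE u v : dot u v = coord7 1 u * coord7 1 v + coord7 2 u * coord7 2 v + coord7 3 u * coord7 3 v
  + coord7 4 u * coord7 4 v + coord7 5 u * coord7 5 v + coord7 6 u * coord7 6 v + coord7 7 u * coord7 7 v.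
Proof.
rewrite /dot (eq_bigr (fun i : 'I_7 => coord7 i.+1 u * coord7 i.+1 v)); last by move=> i _; rewrite !c7ord.
rewrite !big_ord_recl big_ord0 /=; ring.
Qed.
Lemma cebas (j : nat) (k : 'I_7) : (j < 7)%N -> coord7 j.+1 (ebas R k) = (nat_of_ord k == j)%:R.
Proof. move=> hj; rewrite /coord7 /ebas mxE /=. by rewrite -(inj_eq val_inj) /= inordK // eq_sym. Qed.
Lemma cebas2 (i j : nat) : (i < 7)%N -> (j < 7)%N -> coord7 i.+1 (ebas R (inord j)) = (j == i)%:R.
Proof. by move=> hi hj; rewrite cebas // inordK. Qed.
Lemma crossK k u v : coord7 k.+1 (cross u v) = phi u v (ebas R (inord k)).
Proof. by rewrite /coord7 mxE. Qed.
Lemma cross1 u v : coord7 1 (cross u v) = coord7 2 u * coord7 3 v - coord7 3 u * coord7 2 v + coord7 4 u * coord7 5 v - coord7 5 u * coord7 4 v - coord7 6 u * coord7 7 v + coord7 7 u * coord7 6 v.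
Proof. by rewrite crossK /phi !e3E !cebas2 //=; ring. Qed.
Lemma cross2 u v : coord7 2 (cross u v) = - coord7 1 u * coord7 3 v + coord7 3 u * coord7 1 v + coord7 4 u * coord7 6 v + coord7 5 u * coord7 7 v - coord7 6 u * coord7 4 v - coord7 7 u * coord7 5 v.
Proof. by rewrite crossK /phi !e3E !cebas2 //=; ring. Qed.
Lemma cross3 u v : coord7 3 (cross u v) = coord7 1 u * coord7 2 v - coord7 2 u * coord7 1 v + coord7 4 u * coord7 7 v - coord7 5 u * coord7 6 v + coord7 6 u * coord7 5 v - coord7 7 u * coord7 4 v.
Proof. by rewrite crossK /phi !e3E !cebas2 //=; ring. Qed.
Lemma cross4 u v : coord7 4 (cross u v) = - coord7 1 u * coord7 5 v - coord7 2 u * coord7 6 v - coord7 3 u * coord7 7 v + coord7 5 u * coord7 1 v + coord7 6 u * coord7 2 v + coord7 7 u * coord7 3 v.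
Proof. by rewrite crossK /phi !e3E !cebas2 //=; ring. Qed.
Lemma cross5 u v : coord7 5 (cross u v) = coord7 1 u * coord7 4 v - coord7 2 u * coord7 7 v + coord7 3 u * coord7 6 v - coord7 4 u * coord7 1 v - coord7 6 u * coord7 3 v + coord7 7 u * coord7 2 v.
Proof. by rewrite crossK /phi !e3E !cebas2 //=; ring. Qed.
Lemma cross6 u v : coord7 6 (cross u v) = coord7 1 u * coord7 7 v + coord7 2 u * coord7 4 v - coord7 3 u * coord7 5 v - coord7 4 u * coord7 2 v + coord7 5 u * coord7 3 v - coord7 7 u * coord7 1 v.
Proof. by rewrite crossK /phi !e3E !cebas2 //=; ring. Qed.
Lemma cross7 u v : coord7 7 (cross u v) = - coord7 1 u * coord7 6 v + coord7 2 u * coord7 5 v + coord7 3 u * coord7 4 v - coord7 4 u * coord7 3 v - coord7 5 u * coord7 2 v + coord7 6 u * coord7 1 v.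
Proof. by rewrite crossK /phi !e3E !cebas2 //=; ring. Qed.
Lemma coordD k u v : coord7 k (u + v) = coord7 k u + coord7 k v.
Proof. by rewrite /coord7 mxE. Qed.
Lemma coordB k u v : coord7 k (u - v) = coord7 k u - coord7 k v.
Proof. by rewrite /coord7 !mxE. Qed.
Lemma coordN k u : coord7 k (- u) = - coord7 k u.
Proof. by rewrite /coord7 mxE. Qed.
Lemma coordZ k (s : R) u : coord7 k (s *: u) = s * coord7 k u.
Proof. by rewrite /coord7 mxE. Qed.
Lemma coord0 k : coord7 k (0 : 'rV[R]_7) = 0.
Proof. by rewrite /coord7 /GRing.zero /= /const_mx mxE. Qed.
Lemma vec_eq u v : coord7 1 u = coord7 1 v -> coord7 2 u = coord7 2 v -> coord7 3 u = coord7 3 v ->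
  coord7 4 u = coord7 4 v -> coord7 5 u = coord7 5 v -> coord7 6 u = coord7 6 v -> coord7 7 u = coord7 7 v -> u = v.
Proof.
move=> h1 h2 h3 h4 h5 h6 h7; apply/rowP => k; rewrite !c7ord.
by case: k => [[|[|[|[|[|[|[|k]]]]]]] hk] //=.
Qed.
Ltac csimp := rewrite ?(coordD, coordB, coordN, coordZ, coord0, cross1, cross2, cross3, cross4, cross5, cross6, cross7, dotE).
Ltac vsolve := apply: vec_eq; csimp; ring.

Lemma crossC u v : cross v u = - cross u v. Proof. vsolve. Qed.
Lemma crossDl u v w : cross (u + v) w = cross u w + cross v w. Proof. vsolve. Qed.
Lemma crossDr u v w : cross w (u + v) = cross w u + cross w v. Proof. vsolve. Qed.
Lemma crossBl u v w : cross (u - v) w = cross u w - cross v w. Proof. vsolve. Qed.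
Lemma crossBr u v w : cross w (u - v) = cross w u - cross w v. Proof. vsolve. Qed.
Lemma crossZl (s : R) u w : cross (s *: u) w = s *: cross u w. Proof. vsolve. Qed.
Lemma crossZr (s : R) u w : cross w (s *: u) = s *: cross w u. Proof. vsolve. Qed.
Lemma crossNl u w : cross (- u) w = - cross u w. Proof. vsolve. Qed.
Lemma crossNr u w : cross w (- u) = - cross w u. Proof. vsolve. Qed.
Lemma cross0l u : cross 0 u = 0. Proof. vsolve. Qed.
Lemma cross0r u : cross u 0 = 0. Proof. vsolve. Qed.
Lemma crossuu u : cross u u = 0. Proof. vsolve. Qed.
Lemma cross_cross u v : cross u (cross u v) = dot u v *: u - dot u u *: v. Proof. vsolve. Qed.
Lemma dotC u v : dot v u = dot u v. Proof. rewrite !dotE; ring. Qed.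
Lemma dotDl u v w : dot (u + v) w = dot u w + dot v w. Proof. csimp; ring. Qed.
Lemma dotDr u v w : dot w (u + v) = dot w u + dot w v. Proof. csimp; ring. Qed.
Lemma dotBl u v w : dot (u - v) w = dot u w - dot v w. Proof. csimp; ring. Qed.
Lemma dotBr u v w : dot w (u - v) = dot w u - dot w v. Proof. csimp; ring. Qed.
Lemma dotZl (s : R) u w : dot (s *: u) w = s * dot u w. Proof. csimp; ring. Qed.
Lemma dotZr (s : R) u w : dot w (s *: u) = s * dot w u. Proof. csimp; ring. Qed.
Lemma dotNl u w : dot (- u) w = - dot u w. Proof. csimp; ring. Qed.
Lemma dotNr u w : dot w (- u) = - dot w u. Proof. csimp; ring. Qed.
Lemma dot0l u : dot 0 u = 0. Proof. csimp; ring. Qed.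
Lemma dot0r u : dot u 0 = 0. Proof. csimp; ring. Qed.
Lemma dot_crossl u v : dot u (cross u v) = 0. Proof. csimp; ring. Qed.
Lemma dot_crossr u v : dot v (cross u v) = 0. Proof. csimp; ring. Qed.
Lemma dot_cross_cross u v : dot (cross u v) (cross u v) = dot u u * dot v v - dot u v ^+ 2.
Proof. csimp; ring. Qed.
Lemma phi_dot u v w : phi u v w = dot (cross u v) w.
Proof. rewrite /phi !e3E; csimp; ring. Qed.
Lemma dot_ge0 u : 0 <= dot u u.
Proof. by apply: sumr_ge0 => i _; rewrite -expr2 sqr_ge0. Qed.
Lemma dot_eq0 u : dot u u = 0 -> u = 0.
Proof.
move=> h; apply/rowP => i.
have H : forall j : 'I_7, true -> 0 <= u 0 j * u 0 j by move=> j _; rewrite -expr2 sqr_ge0.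
have := psumr_eq0P H h (i:=i) isT; move/eqP; rewrite mulf_eq0 orbb => /eqP ->.
by rewrite c7ord coord0.
Qed.
Lemma dot_neq0 u : u != 0 -> dot u u != 0.
Proof. by apply: contra => /eqP /dot_eq0 ->. Qed.
Lemma xinord u j : u 0 (inord j) = coord7 j.+1 u.
Proof. by []. Qed.
Lemma sum7 (F : 'I_7 -> R) : \sum_(a < 7) F a = F (inord 0) + F (inord 1) + F (inord 2) + F (inord 3)
  + F (inord 4) + F (inord 5) + F (inord 6).
Proof.
rewrite (eq_bigr (fun a : 'I_7 => F (inord a))); last by move=> a _; rewrite inord_val.
rewrite -(big_mkord xpredT (fun i => F (inord i))) unlock /=.
by rewrite !addrA addr0.
Qed.
Lemma coord_mul k x (M : 'M[R]_7) : coord7 k.+1 (x *m M) = \sum_(a < 7) x 0 a * M a (inord k).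
Proof. by rewrite /coord7 mxE. Qed.
Lemma e4E i j k l u v w z : e4 i j k l u v w z =
  coord7 i u * coord7 j v * coord7 k w * coord7 l z - coord7 i u * coord7 j v * coord7 k z * coord7 l w - coord7 i u * coord7 j w * coord7 k v * coord7 l z + coord7 i u * coord7 j w * coord7 k z * coord7 l v + coord7 i u * coord7 j z * coord7 k v * coord7 l w - coord7 i u * coord7 j z * coord7 k w * coord7 l v - coord7 i v * coord7 j u * coord7 k w * coord7 l z + coord7 i v * coord7 j u * coord7 k z * coord7 l w + coord7 i v * coord7 j w * coord7 k u * coord7 l z - coord7 i v * coord7 j w * coord7 k z * coord7 l u - coord7 i v * coord7 j z * coord7 k u * coord7 l w + coord7 i v * coord7 j z * coord7 k w * coord7 l u + coord7 i w * coord7 j u * coord7 k v * coord7 l z - coord7 i w * coord7 j u * coord7 k z * coord7 l v - coord7 i w * coord7 j v * coord7 k u * coord7 l z + coord7 i w * coord7 j v * coord7 k z * coord7 l u + coord7 i w * coord7 j z * coord7 k u * coord7 l v - coord7 i w * coord7 j z * coord7 k v * coord7 l u - coord7 i z * coord7 j u * coord7 k v * coord7 l w + coord7 i z * coord7 j u * coord7 k w * coord7 l v + coord7 i z * coord7 j v * coord7 k u * coord7 l w - coord7 i z * coord7 j v * coord7 k w * coord7 l u - coord7 i z * coord7 j w * coord7 k u * coord7 l v + coord7 i z * coord7 j w * coord7 k v * coord7 l u.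
Proof.
rewrite /e4; set A := (\matrix_(_, _) _). (do 4 rewrite !(expand_det_row _ ord0) !big_ord_recl !big_ord0 /cofactor).
rewrite !det_mx00 /A !mxE /=. ring.
Qed.

Lemma psi_gen u v w z : psi u v w z = dot u w * dot v z - dot u z * dot v w - phi (cross u v) w z.
Proof. rewrite /psi !e4E phi_dot. csimp. ring. Qed.

Ltac zsimp := rewrite ?(mulr0n, mulr1n, mulr0, mul0r, mulr1, mul1r, addr0, add0r, subr0, sub0r, oppr0).
Ltac bsimp := rewrite ?(coord_mul, sum7, xinord, mxE, cebas2) //=.
Lemma act_contract x z : x *m contract z = cross z x.
Proof. apply: vec_eq; bsimp; rewrite -?crossK; csimp; rewrite ?cebas2 //=; zsimp; ring. Qed.
Lemma dot_e u (k : 'I_7) : dot u (ebas R k) = u 0 k.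
Proof.
rewrite /dot (bigD1 k) //= big1 => [|i hik]; rewrite /ebas !mxE ?eqxx /=.
  by rewrite mulr1 addr0.
by rewrite (negbTE hik) mulr0.
Qed.
Lemma act_wedge x u v : x *m wedge u v = dot x u *: v - dot x v *: u.
Proof. apply: vec_eq; bsimp; rewrite ?dot_e ?xinord; csimp; ring. Qed.
Definition vvc (M : 'M[R]_7) (k : nat) : R :=
  match k with
| 0 => M (inord 1) (inord 2) + M (inord 3) (inord 4) - M (inord 5) (inord 6)
| 1 => - M (inord 0) (inord 2) + M (inord 3) (inord 5) + M (inord 4) (inord 6)
| 2 => M (inord 0) (inord 1) + M (inord 3) (inord 6) - M (inord 4) (inord 5)
| 3 => - M (inord 0) (inord 4) - M (inord 1) (inord 5) - M (inord 2) (inord 6)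
| 4 => M (inord 0) (inord 3) - M (inord 1) (inord 6) + M (inord 2) (inord 5)
| 5 => M (inord 0) (inord 6) + M (inord 1) (inord 3) - M (inord 2) (inord 4)
| 6 => - M (inord 0) (inord 5) + M (inord 1) (inord 4) + M (inord 2) (inord 3)
| _ => 0 end.
Definition vv (M : 'M[R]_7) : 'rV[R]_7 := \row_(k < 7) (3^-1 * vvc M k).
Lemma coord_vv k M : (k < 7)%N -> coord7 k.+1 (vv M) = 3^-1 * vvc M k.
Proof. by move=> hk; rewrite /coord7 mxE /= inordK. Qed.
Lemma vv_contract z : vv (contract z) = z.
Proof.
apply: vec_eq; rewrite coord_vv //= !mxE -?crossK; csimp; rewrite ?cebas2 //=; zsimp; field; done.
Qed.
Lemma vv_wedge u v : vv (wedge u v) = 3^-1 *: cross u v.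
Proof. apply: vec_eq; rewrite coord_vv //= !mxE ?dot_e ?xinord; csimp; ring. Qed.
Lemma vvD M N : vv (M + N) = vv M + vv N.
Proof. apply: vec_eq; rewrite ?coordD !coord_vv //= !mxE; ring. Qed.
Lemma vvZ (s : R) M : vv (s *: M) = s *: vv M.
Proof. apply: vec_eq; rewrite ?coordZ !coord_vv //= !mxE; ring. Qed.
Lemma vvB M N : vv (M - N) = vv M - vv N.
Proof. apply: vec_eq; rewrite ?coordB !coord_vv //= !mxE; ring. Qed.
Lemma contractD z1 z2 : contract (z1 + z2) = contract z1 + contract z2.
Proof. by apply/matrixP => i j; rewrite !mxE !phi_dot crossDl dotDl. Qed.
Lemma contractZ (s : R) z : contract (s *: z) = s *: contract z.
Proof. by apply/matrixP => i j; rewrite !mxE !phi_dot crossZl dotZl. Qed.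
Lemma contractB z1 z2 : contract (z1 - z2) = contract z1 - contract z2.
Proof. by apply/matrixP => i j; rewrite !mxE !phi_dot crossBl dotBl. Qed.
Lemma wedgeDl u1 u2 v : wedge (u1 + u2) v = wedge u1 v + wedge u2 v.
Proof. apply/matrixP => i j; rewrite !mxE !dotDl; ring. Qed.
Lemma wedgeDr u v1 v2 : wedge u (v1 + v2) = wedge u v1 + wedge u v2.
Proof. apply/matrixP => i j; rewrite !mxE !dotDl; ring. Qed.
Lemma wedgeZl (s : R) u v : wedge (s *: u) v = s *: wedge u v.
Proof. apply/matrixP => i j; rewrite !mxE !dotZl; ring. Qed.
Lemma wedgeZr (s : R) u v : wedge u (s *: v) = s *: wedge u v.
Proof. apply/matrixP => i j; rewrite !mxE !dotZl; ring. Qed.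
Lemma wedgeC u v : wedge v u = - wedge u v.
Proof. apply/matrixP => i j; rewrite !mxE; ring. Qed.
Lemma wedgeuu u : wedge u u = 0.
Proof. apply/matrixP => i j; rewrite !mxE; ring. Qed.
Lemma Psi_id u v : Psi u v = wedge u v - contract (cross u v).
Proof. by apply/matrixP => i j; rewrite !mxE psi_gen. Qed.
Lemma act_eq0 (M : 'M[R]_7) : (forall x, x *m M = 0) -> M = 0.
Proof.
move=> h; apply/matrixP => i j.
have := congr1 (fun r : 'rV[R]_7 => r 0 j) (h (ebas R i)).
by rewrite /ebas -rowE !mxE => ->.
Qed.
Definition D (M : 'M[R]_7) := M - contract (vv M).
Lemma act_D x M : x *m D M = x *m M - cross (vv M) x.
Proof. by rewrite /D mulmxBr act_contract. Qed.
Lemma D_contract z : D (contract z) = 0.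
Proof. by rewrite /D vv_contract subrr. Qed.
Lemma DD M N : D (M + N) = D M + D N.
Proof. rewrite /D vvD contractD; by rewrite opprD !addrA; congr (_ + _); rewrite -!addrA (addrC (- _)). Qed.

Ltac lsimp := rewrite ?(coordD, coordB, coordN, coordZ, coord0).
Lemma cc1 u v : cross v (cross u v) = dot v v *: u - dot u v *: v. Proof. vsolve. Qed.
Lemma cc2 u v : cross (cross u v) u = dot u u *: v - dot u v *: u. Proof. vsolve. Qed.
Lemma cc4 u v : cross (cross u v) v = dot u v *: v - dot v v *: u. Proof. vsolve. Qed.
Lemma scaler_eq (s t : R) u : u != 0 -> s *: u = t *: u -> s = t.
Proof.
move=> hu /eqP; rewrite -subr_eq0 -scalerBl scaler_eq0 (negbTE hu) orbF subr_eq0.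
by move/eqP.
Qed.

Section Frame.
Variables a b : 'rV[R]_7.
Hypothesis hab : dot a b = 0.
Hypothesis ha : a != 0.
Hypothesis hb : b != 0.
Let haa : dot a a != 0. Proof. exact: dot_neq0. Qed.
Let hbb : dot b b != 0. Proof. exact: dot_neq0. Qed.
Let hba : dot b a = 0. Proof. by rewrite dotC. Qed.

Definition Pi x := (dot x a / dot a a) *: a + (dot x b / dot b b) *: b
  + (dot x (cross a b) / (dot a a * dot b b)) *: cross a b.
Definition sig (s1 s2 s3 : R) := s1 *: wedge b (cross a b) + s2 *: wedge (cross a b) a + s3 *: wedge a b.
Definition nv (s1 s2 s3 : R) := (s1 * dot b b) *: a + (s2 * dot a a) *: b + s3 *: cross a b.

Lemma dcc : dot (cross a b) (cross a b) = dot a a * dot b b.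
Proof. by rewrite dot_cross_cross hab expr0n /= subr0. Qed.

Ltac tab := rewrite ?(crossDl, crossDr, crossZl, crossZr, crossBl, crossBr, crossNl, crossNr, crossuu,
   (crossC a b), cc1, cc2, cc4, cross_cross, hab, hba, scale0r, scaler0, subr0, sub0r, addr0, add0r).

Lemma act_sig x s1 s2 s3 : x *m sig s1 s2 s3 = cross (nv s1 s2 s3) (Pi x).
Proof.
rewrite /sig /nv /Pi !mulmxDr -!scalemxAr !act_wedge; tab.
apply: vec_eq; lsimp; field; rewrite ?haa ?hbb //.
Qed.
Lemma vv_sig s1 s2 s3 : vv (sig s1 s2 s3) = 3^-1 *: nv s1 s2 s3.
Proof. rewrite /sig /nv !vvD !vvZ !vv_wedge; tab; apply: vec_eq; lsimp; ring. Qed.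
Lemma PiD u v : Pi (u + v) = Pi u + Pi v.
Proof. rewrite /Pi !dotDl; apply: vec_eq; lsimp; ring. Qed.
Lemma PiB u v : Pi (u - v) = Pi u - Pi v.
Proof. rewrite /Pi !dotBl; apply: vec_eq; lsimp; ring. Qed.
Lemma PiZ (s : R) u : Pi (s *: u) = s *: Pi u.
Proof. rewrite /Pi !dotZl; apply: vec_eq; lsimp; ring. Qed.
Lemma Pi_comb k1 k2 k3 : Pi (k1 *: a + k2 *: b + k3 *: cross a b) = k1 *: a + k2 *: b + k3 *: cross a b.
Proof.
rewrite /Pi !dotDl !dotZl ?hab ?hba ?dcc ?(dotC a (cross a b)) ?(dotC b (cross a b)) ?dot_crossl ?dot_crossr.
apply: vec_eq; lsimp; field; rewrite ?haa ?hbb //.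
Qed.
Lemma Pi_idem x : Pi (Pi x) = Pi x.
Proof. exact: Pi_comb. Qed.
Lemma Pi_nv s1 s2 s3 : Pi (nv s1 s2 s3) = nv s1 s2 s3.
Proof. exact: Pi_comb. Qed.
Lemma Pi_sym x y : dot (Pi x) y = dot x (Pi y).
Proof.
rewrite /Pi !dotDl !dotDr !dotZl !dotZr (dotC a y) (dotC b y) (dotC (cross a b) y); ring.
Qed.
Lemma Pi_span u : u \in <<[:: a; b; cross a b]>>%VS -> Pi u = u.
Proof.
rewrite !span_cons span_nil addv0 => /memv_addP [u1 /vlineP [k1 ->] [u2 /memv_addP [u3 /vlineP [k2 ->] [u4 /vlineP [k3 ->] ->]] ->]].
by rewrite addrA Pi_comb.
Qed.
Lemma Pi_mem x : Pi x \in <<[:: a; b; cross a b]>>%VS.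
Proof. by rewrite /Pi !rpredD ?rpredZ // memv_span // !inE eqxx ?orbT. Qed.
Lemma nv_mem s1 s2 s3 : nv s1 s2 s3 \in <<[:: a; b; cross a b]>>%VS.
Proof. by rewrite /nv !rpredD ?rpredZ // memv_span // !inE eqxx ?orbT. Qed.
End Frame.

Lemma cross0_dot u v : cross u v = 0 -> dot u u *: v = dot u v *: u.
Proof. move=> h; have := cross_cross u v; rewrite h cross0r => /eqP; rewrite eq_sym subr_eq0 => /eqP ->. done. Qed.

Lemma frame_free u v : u != 0 -> v != 0 -> dot u v = 0 -> free [:: u; v; cross u v].
Proof.
move=> hu hv huv.
have huu := dot_neq0 hu; have hvv := dot_neq0 hv.
have hcc : dot (cross u v) (cross u v) != 0 by rewrite dot_cross_cross huv expr0n /= subr0 mulf_neq0.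
rewrite !free_cons nil_free andbT !span_cons span_nil addv0; apply/and3P; split.
- apply/negP => /memv_addP [u1 /vlineP [k1 ->] [u2 /vlineP [k2 ->] e]].
  move: huu; rewrite {2}e dotDr !dotZr huv dot_crossl !mulr0 addr0 eqxx //.
- apply/negP => /vlineP [k e]; move: hvv; rewrite {2}e dotZr dot_crossr mulr0 eqxx //.
- apply/negP; rewrite memv0 => /eqP h; move: hcc; rewrite h dot0l eqxx //.
Qed.
Lemma frame_eq (P : {vspace 'rV[R]_7}) u v : assoc_plane P -> u \in P -> v \in P -> u != 0 -> v != 0 ->
  dot u v = 0 -> P = <<[:: u; v; cross u v]>>%VS.
Proof.
case=> hd hcl hu hv hu0 hv0 huv; apply/eqP; rewrite eq_sym eqEdim; apply/andP; split.
  apply/span_subvP => x; rewrite !inE => /or3P [] /eqP ->; [exact: hu | exact: hv | exact: hcl].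
by rewrite hd; have := frame_free hu0 hv0 huv; rewrite /free => /eqP ->.
Qed.
Lemma frame_ex (P : {vspace 'rV[R]_7}) : assoc_plane P ->
  exists a b, [/\ a \in P, b \in P, a != 0, b != 0 & dot a b = 0].
Proof.
case=> hd hcl.
have hf := basis_free (vbasisP P). have hm : forall v, v \in (tval (vbasis P)) -> v \in P by move=> v; apply: vbasis_mem. have hs := size_tuple (vbasis P).
move: hf hm hs; move: (tval (vbasis P)) => X hf hm hs; rewrite hd in hs.
case: X hf hm hs => [|p0 [|p1 [|p2 [|]]]] //= hf hm _.
have h0 : p0 \in P by apply: hm; rewrite mem_head.
have h1 : p1 \in P by apply: hm; rewrite in_cons mem_head orbT.
move: hf; rewrite !free_cons => /and3P [hp0 hp1 _].
have p0nz : p0 != 0 by apply: contra hp0 => /eqP ->; exact: mem0v.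
set t := dot p1 p0 / dot p0 p0.
exists p0, (p1 - t *: p0); split => //.
- by rewrite rpredB // rpredZ.
- rewrite subr_eq0; apply/negP => /eqP e.
  have [t0|tn0] := eqVneq t 0.
    by move: hp1; rewrite e t0 scale0r mem0v.
  move: hp0; rewrite (_ : p0 = t^-1 *: p1) ?rpredZ ?memv_span ?inE ?eqxx //.
  by rewrite e scalerA mulVf // scale1r.
- rewrite dotBr dotZr /t (dotC p0 p1) divfK ?subrr //; exact: dot_neq0.
Qed.
Lemma perp_ex (P : {vspace 'rV[R]_7}) a b n : assoc_plane P -> a \in P -> b \in P -> a != 0 -> b != 0 ->
  dot a b = 0 -> n \in P -> n != 0 -> exists x, [/\ x \in P, x != 0 & dot n x = 0].
Proof.
case=> hd hcl ha hb ha0 hb0 hab hn hn0.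
have [h|h] := eqVneq (cross n a) 0; last first.
  by exists (cross n a); split => //; [exact: hcl | exact: dot_crossl].
have [h'|h'] := eqVneq (cross n b) 0; last first.
  by exists (cross n b); split => //; [exact: hcl | exact: dot_crossl].
exfalso.
have ea := cross0_dot h; have eb := cross0_dot h'.
have : (dot n n * dot n n) *: cross a b = 0.
  by rewrite -scalerA -crossZr -crossZl ea eb crossZl crossZr crossuu !scaler0.
move/eqP; rewrite scaler_eq0 mulf_eq0 orbb (negbTE (dot_neq0 hn0)) /= => /eqP hc.
have := dot_cross_cross a b; rewrite hc dot0l hab expr0n /= subr0 => /esym/eqP.
by rewrite mulf_eq0 (negbTE (dot_neq0 ha0)) (negbTE (dot_neq0 hb0)).
Qed.

Section Core.
Variables a b a' b' n m : 'rV[R]_7.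
Hypothesis hab : dot a b = 0. Hypothesis ha : a != 0. Hypothesis hb : b != 0.
Hypothesis hab' : dot a' b' = 0. Hypothesis ha' : a' != 0. Hypothesis hb' : b' != 0.
Hypothesis hPn : Pi a b n = n. Hypothesis hQm : Pi a' b' m = m.
Hypothesis hn : n != 0. Hypothesis hm : m != 0.
Hypothesis EQ : forall x, cross n (Pi a b x) - cross (3^-1 *: n) x = cross m (Pi a' b' x) - cross (3^-1 *: m) x.

Lemma core : exists l : R, [/\ l != 0, m = l *: n &
  forall x, dot n x = 0 -> Pi a b x = x -> x != 0 ->
   Pi a' b' x = ((2 + l) / (3 * l)) *: x /\ ((2 + l) / (3 * l)) ^+ 2 = (2 + l) / (3 * l)].
Proof.
have hnn := dot_neq0 hn.
have E := EQ m. rewrite hQm !crossZl crossuu scaler0 subrr in E.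
set y := Pi a b m - 3^-1 *: m.
have hy : cross n y = 0 by rewrite /y crossBr crossZr.
have A := cross0_dot hy.
set t := dot n y.
have B := congr1 (Pi a b) A.
rewrite PiZ PiZ hPn /y PiB PiZ (Pi_idem hab ha hb) in B.
set l := 3 * t / (2 * dot n n).
have ml : m = l *: n.
  apply/eqP; rewrite -subr_eq0; apply/eqP.
  have -> : m - l *: n = (- 3 / dot n n) *: (dot n n *: y - t *: n)
     + (9 / (2 * dot n n)) *: (dot n n *: (Pi a b m - 3^-1 *: Pi a b m) - t *: n).
    rewrite /y /l; move: (Pi a b m) => p; apply: vec_eq; lsimp; field; rewrite ?hnn //.
  by rewrite A B !subrr !scaler0 addr0.
have hl : l != 0 by apply: contraNneq hm => l0; rewrite ml l0 scale0r.
have hQn : Pi a' b' n = n by apply: (scalerI hl); rewrite -PiZ -ml.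
exists l; split => // x hnx hPx hx0.
have E2 := EQ x; rewrite hPx ml in E2.
set z := (2/3 + l/3) *: x - l *: Pi a' b' x.
have hz : cross n z = 0.
  have -> : cross n z = (cross n x - cross (3^-1 *: n) x)
     - (cross (l *: n) (Pi a' b' x) - cross (3^-1 *: (l *: n)) x).
    rewrite /z !(crossBr, crossDr, crossZr, crossZl, crossBl, crossDl).
    move: (cross n x) (cross n (Pi a' b' x)) => p q; apply: vec_eq; lsimp; field; rewrite ?(dot_neq0 ha') ?(dot_neq0 hb') //.
  by rewrite E2 subrr.
have hdz : dot n z = 0.
  by rewrite /z dotBr !dotZr hnx -(Pi_sym a' b') hQn hnx !mulr0 subrr.
have z0 : z = 0.
  have := cross0_dot hz; rewrite hdz scale0r => /eqP; rewrite scaler_eq0 (negbTE hnn) /=.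
  by move/eqP.
have hx : Pi a' b' x = ((2 + l) / (3 * l)) *: x.
  apply/eqP; rewrite -subr_eq0; apply/eqP.
  have -> : Pi a' b' x - ((2 + l) / (3 * l)) *: x = (- l^-1) *: z.
    rewrite /z; move: (Pi a' b' x) => p; apply: vec_eq; lsimp; field; rewrite ?hl //.
  by rewrite z0 scaler0.
split => //.
apply: (scaler_eq hx0).
have := Pi_idem hab' ha' hb' x; rewrite hx PiZ hx scalerA => h.
by rewrite expr2.
Qed.
End Core.

Lemma mu_one (l l' : R) : l * l' = 1 -> ((2 + l) / (3 * l)) ^+ 2 = (2 + l) / (3 * l) ->
  ((2 + l') / (3 * l')) ^+ 2 = (2 + l') / (3 * l') -> (2 + l) / (3 * l) = 1.
Proof.
move=> hll h1 h2.
have hl : l != 0 by apply/eqP => l0; move: hll; rewrite l0 mul0r => /eqP; rewrite eq_sym oner_eq0.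
have el' : l' = l^-1 by rewrite -[l'](mulKf hl) hll mulr1.
rewrite el' in h2.
have : ((2 + l) / (3 * l)) * ((2 + l) / (3 * l) - 1) = 0 by rewrite mulrBr mulr1 -expr2 h1 subrr.
move/eqP; rewrite mulf_eq0 => /orP [/eqP m0|]; last by rewrite subr_eq0 => /eqP.
exfalso.
have l2 : 2 + l = 0.
  move: m0 => /eqP; rewrite mulf_eq0 invr_eq0 mulf_eq0 (negbTE hl) orbF => /orP [/eqP //|].
  by rewrite pnatr_eq0.
have lm2 : l = -2 by apply/eqP; rewrite -addr_eq0 addrC l2.
rewrite lm2 in h2.
have e : (2 + (-2)^-1) / (3 * (-2)^-1) = -1 :> R by field.
rewrite e sqrrN expr1n in h2.
by move: h2; lra.
Qed.

Lemma theta_dec (P : {vspace 'rV[R]_7}) a b (w : 'M[R]_7) : assoc_plane P -> a \in P -> b \in P -> a != 0 -> b != 0 ->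
  dot a b = 0 -> Theta P w ->
  exists s1 s2 s3 y, y \in P /\ w = sig a b s1 s2 s3 + contract y.
Proof.
move=> hP ha hb ha0 hb0 hab [w1 [w2 [h1 h2 ->]]].
have eP := frame_eq hP ha hb ha0 hb0 hab.
set c := cross a b.
pose L := [:: wedge b c; wedge c a; wedge a b; contract a; contract b; contract c].
pose W : {vspace 'M[R]_7} := <<L>>%VS.
have dec : forall u, u \in P -> exists k1 k2 k3, u = k1 *: a + k2 *: b + k3 *: c.
  move=> u; rewrite eP !span_cons span_nil addv0 => /memv_addP [u1 /vlineP [k1 ->] [u2 /memv_addP [u3 /vlineP [k2 ->] [u4 /vlineP [k3 ->] ->]] ->]].
  by exists k1, k2, k3; rewrite addrA.
have inW : forall M, M \in L -> M \in W by move=> M hM; exact: memv_span.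
have hC : forall u, u \in P -> contract u \in W.
  move=> u /dec [k1 [k2 [k3 ->]]]; rewrite !contractD !contractZ.
  by repeat (apply: rpredD || apply: rpredZ || rewrite rpredN || apply: rpred0 || (apply: inW; rewrite !inE ?eqxx ?orbT //)).
have hW : forall u v, u \in P -> v \in P -> wedge u v \in W.
  move=> u v /dec [k1 [k2 [k3 ->]]] /dec [l1 [l2 [l3 ->]]].
  rewrite !(wedgeDl, wedgeDr, wedgeZl, wedgeZr, wedgeuu, (wedgeC a b), (wedgeC b c), (wedgeC c a)).
  by repeat (apply: rpredD || apply: rpredZ || rewrite rpredN || apply: rpred0 || (apply: inW; rewrite !inE ?eqxx ?orbT //)).
have hPsi : forall u v, u \in P -> v \in P -> Psi u v \in W.
  move=> u v hu hv; rewrite Psi_id rpredB //; [exact: hW | apply: hC; exact: hP.2].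
have w1W : w1 \in W by apply: h1 => x [u [v [hu hv ->]]]; exact: hW.
have w2W : w2 \in W by apply: h2 => x [u [v [hu hv ->]]]; exact: hPsi.
have : w1 + w2 \in W by rewrite rpredD.
rewrite /W /L !span_cons span_nil addv0 => /memv_addP [M1 /vlineP [k1 ->] [M2 /memv_addP [M3 /vlineP [k2 ->] [M4 /memv_addP [M5 /vlineP [k3 ->] [M6 /memv_addP [M7 /vlineP [k4 ->] [M8 /memv_addP [M9 /vlineP [k5 ->] [M10 /vlineP [k6 ->] ->]] ->]] ->]] ->]] ->]].
exists k1, k2, k3, (k4 *: a + k5 *: b + k6 *: c); split.
  by rewrite eP !rpredD ?rpredZ // memv_span // !inE eqxx ?orbT.
by rewrite /sig !contractD !contractZ -/c !addrA.
Qed.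

Lemma main_thm (P Q : {vspace 'rV[R]_7}) :
  assoc_plane P -> assoc_plane Q -> P != Q ->
  forall w : 'M[R]_7, Theta P w -> Theta Q w -> Lambda27 w.
Proof.
move=> hP hQ hPQ w thP thQ.
have [a [b [ha hb ha0 hb0 hab]]] := frame_ex hP.
have [a' [b' [ha' hb' ha0' hb0' hab']]] := frame_ex hQ.
have [s1 [s2 [s3 [y [hy ew]]]]] := theta_dec hP ha hb ha0 hb0 hab thP.
have [t1 [t2 [t3 [y' [hy' ew']]]]] := theta_dec hQ ha' hb' ha0' hb0' hab' thQ.
exists (vv w).
suff Dw : D w = 0 by apply/eqP; rewrite -subr_eq0; apply/eqP.
set n := nv a b s1 s2 s3. set m := nv a' b' t1 t2 t3.
have actP : forall x, x *m D w = cross n (Pi a b x) - cross (3^-1 *: n) x.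
  by move=> x; rewrite ew DD D_contract addr0 act_D (act_sig hab ha0 hb0) (vv_sig hab).
have actQ : forall x, x *m D w = cross m (Pi a' b' x) - cross (3^-1 *: m) x.
  by move=> x; rewrite ew' DD D_contract addr0 act_D (act_sig hab' ha0' hb0') (vv_sig hab').
have [n0|nn0] := eqVneq n 0.
  by apply: act_eq0 => x; rewrite actP n0 scaler0 !cross0l subrr.
have [m0|mn0] := eqVneq m 0.
  by apply: act_eq0 => x; rewrite actQ m0 scaler0 !cross0l subrr.
exfalso; move/negP: hPQ; apply.
have eP := frame_eq hP ha hb ha0 hb0 hab.
have eQ := frame_eq hQ ha' hb' ha0' hb0' hab'.
have hPn : Pi a b n = n := Pi_nv hab ha0 hb0 _ _ _.
have hQm : Pi a' b' m = m := Pi_nv hab' ha0' hb0' _ _ _.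
have EQ : forall x, cross n (Pi a b x) - cross (3^-1 *: n) x = cross m (Pi a' b' x) - cross (3^-1 *: m) x.
  by move=> x; rewrite -actP -actQ.
have EQ' : forall x, cross m (Pi a' b' x) - cross (3^-1 *: m) x = cross n (Pi a b x) - cross (3^-1 *: n) x.
  by move=> x; rewrite EQ.
have [l [hl ml hx]] := core hab ha0 hb0 hab' ha0' hb0' hPn hQm nn0 mn0 EQ.
have [l' [hl' nl' hy0]] := core hab' ha0' hb0' hab ha0 hb0 hQm hPn mn0 nn0 EQ'.
have nP : n \in P by rewrite eP; exact: nv_mem.
have mQ : m \in Q by rewrite eQ; exact: nv_mem.
have [x0 [x0P x0nz hnx0]] := perp_ex hP ha hb ha0 hb0 hab nP nn0.
have [z0 [z0Q z0nz hmz0]] := perp_ex hQ ha' hb' ha0' hb0' hab' mQ mn0.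
have hPx0 : Pi a b x0 = x0 by apply: (Pi_span hab ha0 hb0); rewrite -eP.
have hQz0 : Pi a' b' z0 = z0 by apply: (Pi_span hab' ha0' hb0'); rewrite -eQ.
have [hx0Q hmu] := hx x0 hnx0 hPx0 x0nz.
have [_ hmu'] := hy0 z0 hmz0 hQz0 z0nz.
have hll : l * l' = 1.
  rewrite mulrC; apply: (scaler_eq nn0).
  by rewrite -scalerA -ml -nl' scale1r.
have mu1 := mu_one hll hmu hmu'.
rewrite mu1 scale1r in hx0Q.
have x0Q : x0 \in Q by rewrite eQ -hx0Q; exact: Pi_mem.
have nQ : n \in Q by rewrite nl' rpredZ.
have hP' := frame_eq hP nP x0P nn0 x0nz hnx0.
have hQ' := frame_eq hQ nQ x0Q nn0 x0nz hnx0.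
by rewrite hP' hQ'.
Qed.
End S.

Theorem proposition4p12 (R : realFieldType) (P Q : {vspace 'rV[R]_7}) :
  assoc_plane P -> assoc_plane Q -> P != Q ->
  forall w : 'M[R]_7, Theta P w -> Theta Q w -> Lambda27 w.
Proof. exact: main_thm. Qed.
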